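(* Let $\{a^1,\ldots,a^n\}\subseteq \mathbb{Z}^m$, let $C:=\operatorname{cone}\{a^1,\ldots,a^n\}$, and let $p$ be a prime. Then $\{a^1,\ldots,a^n\}$ is a $p$-adic generating set for a cone if, and only if, for every nonempty face $F$ of $C$, the set $\{a^i:a^i\in F\}$ is a $p$-adic generating set for a subspace.
   Context: A $p$-adic rational is a number $a/p^k$ with $a,k\in\mathbb{Z}$, $k\ge0$; a vector is $p$-adic if all entries are $p$-adic rationals. A finite set $S\subseteq\mathbb{Z}^m$ is a $p$-adic generating set for a cone if every integral vector in the conic hull of $S$ is a conic combination of the elements of $S$ with $p$-adic coefficients; it is a $p$-adic generating set for a subspace if every integral vector in the linear hull of $S$ is a linear combination of the elements of $S$ with $p$-adic coefficients. *)

(* Defs.v *)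
From HB Require Import structures.
From mathcomp Require Import all_boot all_order all_algebra.
From mathcomp Require Import boolp reals.
Set Implicit Arguments. Unset Strict Implicit. Unset Printing Implicit Defensive.
Import Order.TTheory GRing.Theory Num.Theory.
Local Open Scope ring_scope.

(* Vectors of Z^m are 'rV[int]_m; they are viewed in R^m = 'rV[R]_m
   (R an arbitrary realType, i.e. the real numbers). *)
Definition rvec (R : realType) (m : nat) (v : 'rV[int]_m) : 'rV[R]_m :=
  map_mx (fun z : int => z%:~R) v.

Definition dotv (R : realType) (m : nat) (w x : 'rV[R]_m) : R :=
  \sum_(j < m) w 0 j * x 0 j.

Definition padic (R : realType) (p : nat) (x : R) : Prop :=
  exists (a : int) (k : nat), x = a%:~R / (p%:R ^+ k).

Definition in_cone (R : realType) (m n : nat) (a : 'I_n -> 'rV[int]_m)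
  (x : 'rV[R]_m) : Prop :=
  exists lam : 'I_n -> R, (forall i, 0 <= lam i) /\
    x = \sum_(i < n) lam i *: rvec R (a i).

Definition is_face (R : realType) (m n : nat) (a : 'I_n -> 'rV[int]_m)
  (F : 'rV[R]_m -> Prop) : Prop :=
  exists w : 'rV[R]_m,
    (forall y, in_cone a y -> 0 <= dotv w y) /\
    (forall x, F x <-> (in_cone a x /\ dotv w x = 0)).

Definition padic_gen_cone (R : realType) (p m n : nat)
  (a : 'I_n -> 'rV[int]_m) (P : pred 'I_n) : Prop :=
  forall b : 'rV[int]_m,
    (exists lam : 'I_n -> R, (forall i, P i -> 0 <= lam i) /\
       rvec R b = \sum_(i < n | P i) lam i *: rvec R (a i)) ->
    exists mu : 'I_n -> R, (forall i, P i -> 0 <= mu i /\ padic p (mu i)) /\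
       rvec R b = \sum_(i < n | P i) mu i *: rvec R (a i).

Definition padic_gen_subspace (R : realType) (p m n : nat)
  (a : 'I_n -> 'rV[int]_m) (P : pred 'I_n) : Prop :=
  forall b : 'rV[int]_m,
    (exists lam : 'I_n -> R,
       rvec R b = \sum_(i < n | P i) lam i *: rvec R (a i)) ->
    exists mu : 'I_n -> R, (forall i, P i -> padic p (mu i)) /\
       rvec R b = \sum_(i < n | P i) mu i *: rvec R (a i).

(* Main.v *)
Require Import Defs.
From HB Require Import structures.
From mathcomp Require Import all_boot all_order all_algebra.
From mathcomp Require Import boolp reals.
From mathcomp Require Import ring lra zify.
Import Order.TTheory GRing.Theory Num.Theory.
Local Open Scope ring_scope.
Set Implicit Arguments. Unset Strict Implicit. Unset Printing Implicit Defensive.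
Lemma dotvDl (R : realType) m (u v x : 'rV[R]_m) : dotv (u + v) x = dotv u x + dotv v x.
Proof. rewrite /dotv -big_split; apply: eq_bigr => j _; by rewrite !mxE mulrDl. Qed.
Lemma dotvZl (R : realType) m (t : R) (u x : 'rV[R]_m) : dotv (t *: u) x = t * dotv u x.
Proof. rewrite /dotv mulr_sumr; apply: eq_bigr => j _; rewrite !mxE; ring. Qed.
Lemma dotvNl (R : realType) m (u x : 'rV[R]_m) : dotv (- u) x = - dotv u x.
Proof. by rewrite -scaleN1r dotvZl mulN1r. Qed.
Lemma dotvBl (R : realType) m (u v x : 'rV[R]_m) : dotv (u - v) x = dotv u x - dotv v x.
Proof. by rewrite dotvDl dotvNl. Qed.
Lemma dotvC (R : realType) m (u x : 'rV[R]_m) : dotv u x = dotv x u.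
Proof. by apply: eq_bigr => j _; rewrite mulrC. Qed.
Lemma dotvDr (R : realType) m (u v x : 'rV[R]_m) : dotv x (u + v) = dotv x u + dotv x v.
Proof. by rewrite dotvC dotvDl !(dotvC x). Qed.
Lemma dotvZr (R : realType) m (t : R) (u x : 'rV[R]_m) : dotv x (t *: u) = t * dotv x u.
Proof. by rewrite dotvC dotvZl dotvC. Qed.
Lemma dotvBr (R : realType) m (u v x : 'rV[R]_m) : dotv x (u - v) = dotv x u - dotv x v.
Proof. by rewrite dotvC dotvBl !(dotvC x). Qed.
Lemma dotv0l (R : realType) m (x : 'rV[R]_m) : dotv 0 x = 0.
Proof. by rewrite /dotv big1 // => j _; rewrite mxE mul0r. Qed.
Lemma dotv_suml (R : realType) m (I : eqType) (r : seq I) (P : pred I) (F : I -> 'rV[R]_m) x :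
  dotv (\sum_(i <- r | P i) F i) x = \sum_(i <- r | P i) dotv (F i) x.
Proof.
elim/big_rec2: _ => [|i y1 y2 _ <-]; first exact: dotv0l.
by rewrite dotvDl.
Qed.
Lemma dotv_sumr (R : realType) m (I : eqType) (r : seq I) (P : pred I) (F : I -> 'rV[R]_m) x :
  dotv x (\sum_(i <- r | P i) F i) = \sum_(i <- r | P i) dotv x (F i).
Proof. by rewrite dotvC dotv_suml; apply: eq_bigr => i _; rewrite dotvC. Qed.
Lemma dotv_self_eq0 (R : realType) m (c : 'rV[R]_m) : 0 <= dotv c (- c) -> c = 0.
Proof.
rewrite dotvC dotvNl oppr_ge0 => H.
have H0 : dotv c c = 0.
  apply/eqP; rewrite eq_le H /= /dotv sumr_ge0 // => j _; by rewrite -expr2 sqr_ge0.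
apply/rowP => j; rewrite mxE.
move: H0; rewrite /dotv => /eqP; rewrite psumr_eq0 => [/allP/(_ j (mem_index_enum _))|j' _]; last by rewrite -expr2 sqr_ge0.
by rewrite /= mulf_eq0 orbb => /eqP.
Qed.
Lemma farkas (R : realType) m (s : seq 'rV[R]_m) (c : 'rV[R]_m) :
  (forall x, (forall i, (i < size s)%N -> 0 <= dotv s`_i x) -> 0 <= dotv c x) ->
  exists lam : nat -> R, (forall i, 0 <= lam i) /\ c = \sum_(i < size s) lam i *: s`_i.
Proof.
move Hn: (size s) => n; elim: n s Hn c => [|n IH] [|a s] //= Hn c Hc; last (case: Hn => Hn; subst n).
  exists (fun _ => 0); split => //; rewrite big_ord0; apply: dotv_self_eq0.
  by apply: Hc.
case: (pselect (forall x, (forall i, (i < size s)%N -> 0 <= dotv s`_i x) -> 0 <= dotv c x)) => [H|H].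
  have [lam [L0 ->]] := IH s erefl c H.
  exists (fun i => if i is k.+1 then lam k else 0); split; first by case.
  by rewrite big_ord_recl /= scale0r add0r.
move: H => /existsNP [y /not_implyP [Hy Hcy]].
have cy : dotv c y < 0 by rewrite ltNge; apply/negP.
have ay : dotv a y < 0.
  rewrite ltNge; apply/negP => ay; apply: Hcy; apply: Hc => -[|i] //= /Hy.
  by [].
have ay0 : dotv a y != 0 by rewrite lt_eqF.
pose t v := dotv v y / dotv a y.
pose s' := map (fun v => v - t v *: a) s.
pose c' := c - t c *: a.
have H' : forall x, (forall i, (i < size s)%N -> 0 <= dotv s'`_i x) -> 0 <= dotv c' x.
  move=> x Hx; pose z := x - (dotv a x / dotv a y) *: y.
  have key : forall v, dotv v z = dotv (v - t v *: a) x.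
    by move=> v; rewrite /z dotvBr dotvZr dotvBl dotvZl /t; ring.
  rewrite /c' -key; apply: Hc => -[|i] /=.
    by rewrite key /t divff // scale1r subrr dotv0l.
  move=> Hi; rewrite key; have := Hx i Hi.
  by rewrite /s' (nth_map 0).
have Hs' : size s' = size s by rewrite size_map.
have [lam [L0 Hc']] := IH s' Hs' c' H'.
exists (fun i => if i is k.+1 then lam k else (t c - \sum_(k < size s) lam k * t s`_k)).
split.
  case => [|k] //.
  have -> : t c - \sum_(k < size s) lam k * t s`_k
          = (- (dotv c y - \sum_(k < size s) lam k * dotv s`_k y)) / (- dotv a y).
    rewrite invrN mulrNN /t mulrBl mulr_suml; congr (_ - _); rewrite mulr_suml; apply: eq_bigr => k _.
    by rewrite mulrA.
  apply: divr_ge0; last by rewrite oppr_ge0 ltW.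
  rewrite oppr_ge0 subr_le0; apply: le_trans (ltW cy) _.
  by apply: sumr_ge0 => k _; apply: mulr_ge0 => //; apply: Hy.
rewrite big_ord_recl /=.
have E : c = c' + t c *: a by rewrite subrK.
rewrite {1}E Hc' /s'.
rewrite (eq_bigr (fun i : 'I_(size s) => lam i *: s`_i - (lam i * t s`_i) *: a)); last first.
  by move=> i _; rewrite (nth_map 0) // scalerBr scalerA.
rewrite sumrB -scaler_suml scalerBl.
rewrite [X in _ = _ + X](eq_bigr (fun i : 'I_(size s) => lam i *: s`_i)) //.
by rewrite [RHS]addrAC [LHS]addrC [LHS]addrA.
Qed.

Lemma rvecD (R : realType) m (u v : 'rV[int]_m) : rvec R (u + v) = rvec R u + rvec R v.
Proof. by apply/rowP => j; rewrite !mxE intrD. Qed.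
Lemma rvecN (R : realType) m (u : 'rV[int]_m) : rvec R (- u) = - rvec R u.
Proof. by apply/rowP => j; rewrite !mxE intrN. Qed.
Lemma rvecB (R : realType) m (u v : 'rV[int]_m) : rvec R (u - v) = rvec R u - rvec R v.
Proof. by rewrite rvecD rvecN. Qed.
Lemma rvecZ (R : realType) m (z : int) (u : 'rV[int]_m) : rvec R (z *: u) = z%:~R *: rvec R u.
Proof. by apply/rowP => j; rewrite !mxE intrM. Qed.
Lemma rvec0 (R : realType) m : rvec R (0 : 'rV[int]_m) = 0.
Proof. by apply/rowP => j; rewrite !mxE. Qed.
Lemma rvec_sum (R : realType) m (I : Type) (r : seq I) (P : pred I) (F : I -> 'rV[int]_m) :
  rvec R (\sum_(i <- r | P i) F i) = \sum_(i <- r | P i) rvec R (F i).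
Proof.
elim/big_rec2: _ => [|i y1 y2 _ <-]; first exact: rvec0.
by rewrite rvecD.
Qed.

Lemma pexp_neq0 (R : realType) p k : prime p -> ((p%:R : R) ^+ k) != 0.
Proof. by move=> pp; rewrite expf_neq0 // pnatr_eq0 -lt0n prime_gt0. Qed.

Lemma padic0 (R : realType) p : padic p (0 : R).
Proof. by exists 0, 0%N; rewrite mul0r. Qed.

Lemma padic_subn (R : realType) p (x : R) (N : nat) : prime p -> padic p x -> padic p (x - N%:R).
Proof.
move=> pp [z [k ->]]; exists (z - N%:Z * (p ^ k)%:Z), k.
have e1 : ((N%:Z)%:~R : R) = N%:R by [].
have e2 : (((p ^ k)%:Z)%:~R : R) = (p%:R) ^+ k by rewrite -natrX.
by rewrite intrB intrM e1 e2 mulrBl mulfK ?pexp_neq0.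
Qed.

Lemma padic_shift (R : realType) p (x : R) (z : int) (e : nat) : prime p -> padic p x ->
  padic p ((z%:~R + x) / (p ^ e)%:R).
Proof.
move=> pp [y [k ->]]; exists (z * (p ^ k)%:Z + y), (k + e)%N.
have e2 : (((p ^ k)%:Z)%:~R : R) = (p%:R) ^+ k by rewrite -natrX.
rewrite natrX exprD intrD intrM e2.
rewrite invfM mulrA; congr (_ * _); rewrite mulrDl mulfK ?pexp_neq0 //.
Qed.

Lemma farkas2 (R : realType) m n (v : 'I_n -> 'rV[R]_m) (e c : 'rV[R]_m) :
  (forall x, (forall i, 0 <= dotv (v i) x) -> 0 <= dotv e x -> 0 <= dotv c x) ->
  exists t, exists lam : 'I_n -> R, 0 <= t /\ (forall i, 0 <= lam i) /\
     c = t *: e + \sum_i lam i *: v i.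
Proof.
move=> H.
pose s := e :: [tuple v i | i < n].
have Hp : forall x, (forall i, (i < size s)%N -> 0 <= dotv s`_i x) -> 0 <= dotv c x.
  move=> x Hx; apply: H; last exact: (Hx 0%N).
  move=> i; have H1 : (i.+1 < size s)%N by rewrite /s -[size _]/((size [tuple v i | i < n]).+1) size_tuple ltnS.
  have := Hx _ H1.
  by rewrite (_ : s`_i.+1 = [tuple v i | i < n]`_i) // (nth_mktuple _ 0 i).
have [lam [L0 Hc]] := @farkas R m s c Hp.
exists (lam 0%N), (fun i : 'I_n => lam i.+1); split; first exact: L0.
split; first by move=> i; exact: L0.
rewrite Hc /= big_ord_recl /=; congr (_ + _).
rewrite size_map size_enum_ord; apply: eq_bigr => i _.
by rewrite add0n (nth_map i) ?size_enum_ord // nth_ord_enum.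
Qed.

Lemma ain (R : realType) m n (a : 'I_n -> 'rV[int]_m) i : in_cone a (rvec R (a i)).
Proof.
exists (fun j => (j == i)%:R); split => [j|]; first by rewrite ler0n.
rewrite (bigD1 i) //= eqxx scale1r big1 ?addr0 // => j /negbTE ->.
by rewrite scale0r.
Qed.

Lemma forward (R : realType) m n p (a : 'I_n -> 'rV[int]_m) : prime p ->
  padic_gen_cone R p a predT ->
  forall F, is_face a F -> padic_gen_subspace R p a (fun i => `[< F (rvec R (a i)) >]).
Proof.
move=> pp Hc F [w [Hw HF]] b [lam Hb].
set T := fun i => `[< F (rvec R (a i)) >] in Hb *.
have HT : forall i, T i = (dotv w (rvec R (a i)) == 0).
  move=> i; apply/asboolP/eqP => [/HF [] //| H]; apply/HF; split => //; exact: ain.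
have wge : forall i, 0 <= dotv w (rvec R (a i)) by move=> i; apply: Hw; exact: ain.
pose N := Num.bound (\sum_i `|lam i|).
have HN : forall i, - lam i <= N%:R.
  move=> i; apply: le_trans (ltW (archi_boundP _)); last by apply: sumr_ge0.
  rewrite (bigD1 i) //=; apply: le_trans (_ : `|lam i| <= _); first by rewrite ler_normr lexx orbT.
  by rewrite lerDl sumr_ge0.
pose b' := b + (N%:Z) *: \sum_(i | T i) a i.
have Hb' : rvec R b' = \sum_(i < n | predT i) (if T i then lam i + N%:R else 0) *: rvec R (a i).
  rewrite rvecD rvecZ rvec_sum Hb scaler_sumr -big_split /=.
  rewrite big_mkcond [RHS]big_mkcond /=; apply: eq_bigr => i _.
  rewrite -/(T i); case: (T i); rewrite ?scalerDl ?scale0r //.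
have [mu [Hmu Hbm]] : exists mu : 'I_n -> R, (forall i, predT i -> 0 <= mu i /\ padic p (mu i)) /\
       rvec R b' = \sum_(i < n | predT i) mu i *: rvec R (a i).
  apply: Hc; exists (fun i => if T i then lam i + N%:R else 0); split => // i _.
  by case: (T i) => //; have := HN i; lra.
have dot0 : \sum_(i < n | predT i) mu i * dotv w (rvec R (a i)) = 0.
  have H0 : dotv w (rvec R b') = 0.
    rewrite Hb' dotv_sumr big1 // => i _; rewrite dotvZr.
    by case: ifP => [| _]; [rewrite HT => /eqP ->; rewrite mulr0 | rewrite mul0r].
  apply: (etrans _ H0); rewrite Hbm dotv_sumr.
  by apply: eq_bigr => i _; rewrite dotvZr.
have mu0 : forall i, ~~ T i -> mu i = 0.
  move=> i Ti.
  have := @psumr_eq0P R 'I_n predT (fun j => mu j * dotv w (rvec R (a j)))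
    (fun j _ => mulr_ge0 (Hmu j isT).1 (wge j)) dot0 i isT.
  move/eqP.
  by rewrite mulf_eq0 -HT (negbTE Ti) orbF => /eqP.
exists (fun i => mu i - N%:R); split.
  by move=> i _; apply: padic_subn => //; exact: (Hmu i isT).2.
have -> : rvec R b = rvec R b' - N%:R *: \sum_(i | T i) rvec R (a i).
  by rewrite /b' rvecD rvecZ rvec_sum addrK.
rewrite Hbm scaler_sumr big_mkcond [X in _ - X]big_mkcond [RHS]big_mkcond /= -sumrB.
apply: eq_bigr => i _; rewrite -/(T i); case: (boolP (T i)) => Ti; first by rewrite scalerBl.
by rewrite mu0 // scale0r subrr.
Qed.

Definition rep (R : realType) m n (v : 'I_n -> 'rV[R]_m) (x : 'rV[R]_m) (lam : 'I_n -> R) :=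
  (forall i, 0 <= lam i) /\ x = \sum_i lam i *: v i.

Lemma sum_delta (R : realType) m n (v : 'I_n -> 'rV[R]_m) j :
  \sum_i (i == j)%:R *: v i = v j.
Proof.
rewrite (bigD1 j) //= eqxx scale1r big1 ?addr0 // => i /negbTE ->.
by rewrite scale0r.
Qed.

Lemma rep_avg (R : realType) m n (v : 'I_n -> 'rV[R]_m) x l1 l2 :
  rep v x l1 -> rep v x l2 -> rep v x (fun i => (l1 i + l2 i) / 2).
Proof.
move=> [H1 E1] [H2 E2]; split.
  by move=> i; apply: divr_ge0; [apply: addr_ge0|].
rewrite (eq_bigr (fun i => 2^-1 *: (l1 i *: v i + l2 i *: v i))); last first.
  by move=> i _; rewrite scalerDr !scalerA !(mulrC 2^-1) -scalerDl mulrDl.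
rewrite -scaler_sumr big_split /= -E1 -E2.
by rewrite -mulr2n -scaler_nat scalerA mulVf ?scale1r // pnatr_eq0.
Qed.

Lemma rep_pos (R : realType) m n (v : 'I_n -> 'rV[R]_m) x lam0 : rep v x lam0 ->
  exists lamS, rep v x lamS /\ forall i, (exists l, rep v x l /\ 0 < l i) -> 0 < lamS i.
Proof.
move=> r0.
suff : forall s : seq 'I_n, exists lamS, rep v x lamS /\
   forall i, i \in s -> (exists l, rep v x l /\ 0 < l i) -> 0 < lamS i.
  move=> /(_ (index_enum _)) [lamS [H1 H2]]; exists lamS; split => // i; apply: H2.
  exact: mem_index_enum.
elim => [|j s [l [Hl Hpos]]]; first by exists lam0.
case: (pselect (exists l, rep v x l /\ 0 < l j)) => [[lj [Hlj pj]]|nS].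
  exists (fun i => (l i + lj i) / 2); split; first exact: rep_avg.
  move=> i; rewrite in_cons => /orP [/eqP -> _|Hs Si].
    have := Hl.1 j; lra.
  have := Hpos i Hs Si; have := Hlj.1 i; lra.
exists l; split => // i; rewrite in_cons => /orP [/eqP -> //|Hs Si]; last exact: Hpos.
Qed.

Lemma sep (R : realType) m n (v : 'I_n -> 'rV[R]_m) x l0 : rep v x l0 ->
  forall j, ~ (exists l, rep v x l /\ 0 < l j) ->
  exists w, (forall i, 0 <= dotv w (v i)) /\ dotv w x = 0 /\ 0 < dotv w (v j).
Proof.
move=> [L0 E0] j nS.
case: (pselect (forall y, (forall i, 0 <= dotv (v i) y) -> 0 <= dotv (- x) y ->
                 0 <= dotv (- v j) y)) => [P|nP].
  have [t [lam [t0 [L E]]]] := farkas2 P.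
  exfalso; apply: nS.
  exists (fun i => (l0 i + lam i + (i == j)%:R) / (t + 1)); split; last first.
    rewrite eqxx /=; apply: divr_gt0; last lra.
    by have := L0 j; have := L j; rewrite mulr1n; lra.
  split.
    move=> i; apply: divr_ge0; last lra.
    by rewrite !addr_ge0.
  have Hl : \sum_i lam i *: v i = t *: x - v j.
    have -> : t *: x - v j = - v j - t *: - x by rewrite scalerN opprK addrC.
    by rewrite E addrC addKr.
  rewrite (eq_bigr (fun i => (t + 1)^-1 *: (l0 i *: v i + lam i *: v i + (i == j)%:R *: v i))); last first.
    by move=> i _; rewrite -!scalerDl scalerA mulrC.
  rewrite -scaler_sumr !big_split /= -E0 Hl sum_delta.
  rewrite addrA subrK -{2}[x]scale1r -scalerDl [1 + t]addrC scalerA mulVf ?scale1r //.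
  by apply: lt0r_neq0; lra.
move: nP => /existsNP [y /not_implyP [Hy /not_implyP [Hx Hj]]].
exists y; split; first by move=> i; rewrite dotvC.
split; last by rewrite dotvC; move: Hj; rewrite dotvNl oppr_ge0 => /negP; rewrite -ltNge.
rewrite dotvC; apply/eqP; rewrite eq_le; apply/andP; split.
  by move: Hx; rewrite dotvNl oppr_ge0.
by rewrite E0 dotv_suml sumr_ge0 // => i _; rewrite dotvZl mulr_ge0.
Qed.

Lemma sep_all (R : realType) m n (v : 'I_n -> 'rV[R]_m) x l0 : rep v x l0 ->
  exists w, (forall i, 0 <= dotv w (v i)) /\ dotv w x = 0 /\
    forall j, ~ (exists l, rep v x l /\ 0 < l j) -> 0 < dotv w (v j).
Proof.
move=> r0.
suff : forall s : seq 'I_n, exists w, (forall i, 0 <= dotv w (v i)) /\ dotv w x = 0 /\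
    forall j, j \in s -> ~ (exists l, rep v x l /\ 0 < l j) -> 0 < dotv w (v j).
  move=> /(_ (index_enum _)) [w [H1 [H2 H3]]]; exists w; split => //; split => // j.
  apply: H3; exact: mem_index_enum.
elim => [|j s [w [H1 [H2 H3]]]]; first by exists 0; split => [i|]; rewrite ?dotv0l.
case: (pselect (exists l, rep v x l /\ 0 < l j)) => [Sj|nS].
  exists w; split => //; split => // i; rewrite in_cons => /orP [/eqP -> //|Hs]; exact: H3.
have [wj [Hj1 [Hj2 Hj3]]] := sep r0 nS.
exists (w + wj); split; first by move=> i; rewrite dotvDl addr_ge0.
split; first by rewrite dotvDl H2 Hj2 addr0.
move=> i; rewrite in_cons dotvDl => /orP [/eqP -> _|Hs Si].
  by apply: ltr_wpDl.
by apply: ltr_wpDr => //; apply: H3.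
Qed.

Definition box_vec m (K : nat) (f : {ffun 'I_m -> 'I_(K.*2.+1)}) : 'rV[int]_m :=
  \row_j ((nat_of_ord (f j))%:Z - K%:Z).

Lemma box_mem m (K : nat) (r : 'rV[int]_m) : (forall j : 'I_m, (absz (r ord0 j) <= K)%N) ->
  r \in [seq box_vec f | f <- enum {ffun 'I_m -> 'I_(K.*2.+1)}].
Proof.
move=> Hr; apply/mapP.
exists [ffun j => inord (absz (r ord0 j + K%:Z))]; first by rewrite mem_enum.
apply/rowP => j; rewrite !mxE ffunE inordK.
  change (r 0 j) with (r ord0 j); have := Hr j; lia.
by have := Hr j; rewrite -addnn; lia.
Qed.

Lemma box_bound (R : realType) p m n (a : 'I_n -> 'rV[int]_m) (T : pred 'I_n) :
  padic_gen_subspace R p a T -> forall l : seq 'rV[int]_m, exists B : R, 0 <= B /\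
  forall r, r \in l ->
    (exists lam : 'I_n -> R, rvec R r = \sum_(i < n | T i) lam i *: rvec R (a i)) ->
  exists mu : 'I_n -> R, (forall i, T i -> padic p (mu i) /\ `|mu i| <= B) /\
    rvec R r = \sum_(i < n | T i) mu i *: rvec R (a i).
Proof.
move=> Hs; elim => [|r0 l [B [B0 HB]]]; first by exists 0.
case: (pselect (exists lam : 'I_n -> R,
   rvec R r0 = \sum_(i < n | T i) lam i *: rvec R (a i))) => [ex|nex].
  have [mu0 [P0 E0]] := Hs r0 ex.
  exists (B + \sum_i `|mu0 i|); split; first by rewrite addr_ge0 ?sumr_ge0.
  move=> r; rewrite in_cons => /orP [/eqP -> _|Hr Hex].
    exists mu0; split => // i Ti; split; first exact: P0.
    apply: le_trans (_ : \sum_i `|mu0 i| <= _); last by rewrite lerDr.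
    by rewrite (bigD1 i) //= lerDl sumr_ge0.
  have [mu [P E]] := HB r Hr Hex; exists mu; split => // i Ti; split; first exact: (P i Ti).1.
  by apply: le_trans (P i Ti).2 _; rewrite lerDl sumr_ge0.
exists B; split => // r; rewrite in_cons => /orP [/eqP -> /nex [] |Hr]; exact: HB.
Qed.

Lemma coord_bound (R : realType) m n (a : 'I_n -> 'rV[int]_m) (T : pred 'I_n)
  (th : 'I_n -> R) (r : 'rV[int]_m) :
  (forall i, T i -> 0 <= th i <= 1) -> rvec R r = \sum_(i | T i) th i *: rvec R (a i) ->
  forall j, (absz (r ord0 j) <= \sum_i \sum_j' absz (a i ord0 j'))%N.
Proof.
move=> Hth Hr j.
rewrite -(ler_nat R) natr_absz intr_norm natr_sum.
have -> : ((r ord0 j)%:~R : R) = (rvec R r) ord0 j by rewrite mxE.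
rewrite Hr summxE.
apply: le_trans (ler_norm_sum _ _ _) _.
apply: le_trans (_ : \sum_(i | T i) `|((a i ord0 j)%:~R : R)| <= _).
  apply: ler_sum => i Ti; rewrite !mxE normrM.
  have /andP [h0 h1] := Hth i Ti.
  by apply: ler_piMl => //; rewrite ger0_norm.
apply: le_trans (_ : \sum_i `|((a i ord0 j)%:~R : R)| <= _).
  rewrite [X in X <= _]big_mkcond; apply: ler_sum => i _; case: ifP => _ //.
apply: ler_sum => i _; rewrite natr_sum (bigD1 j) //= natr_absz intr_norm lerDl.
by apply: sumr_ge0.
Qed.

Lemma backward (R : realType) m n p (a : 'I_n -> 'rV[int]_m) : prime p ->
  (forall F : 'rV[R]_m -> Prop, is_face a F -> (exists x, F x) ->
      padic_gen_subspace R p a (fun i => `[< F (rvec R (a i)) >])) ->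
  padic_gen_cone R p a predT.
Proof.
move=> pp Hf b [lam0 [L0 Hb0]].
pose v := fun i => rvec R (a i).
pose x := rvec R b.
have r0 : rep v x lam0 by split => // i; apply: L0.
have [lamS [[LS ES] posS]] := rep_pos r0.
have [w [wge [wx wpos]]] := sep_all r0.
pose F := fun y => in_cone a y /\ dotv w y = 0.
have face : is_face a F.
  exists w; split => // y [l [Hl ->]]; rewrite dotv_sumr sumr_ge0 // => i _.
  by rewrite dotvZr mulr_ge0 // wge.
have F0 : exists y, F y.
  exists 0; split; last by rewrite dotvC dotv0l.
  exists (fun _ => 0); split => //; by rewrite big1 // => i _; rewrite scale0r.
have Hsub := Hf F face F0.
set T := (fun i => `[< F (rvec R (a i)) >]) in Hsub.
have HT : forall i, T i = (dotv w (v i) == 0).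
  move=> i; rewrite /T; apply/asboolP/eqP => [[] //|H]; split => //; exact: ain.
have term0 : forall i, lamS i * dotv w (v i) = 0.
  have H : \sum_i lamS i * dotv w (v i) = 0.
    apply: (etrans _ wx); rewrite ES dotv_sumr; apply: eq_bigr => i _; by rewrite dotvZr.
  move=> i; exact: (@psumr_eq0P R _ predT (fun i => lamS i * dotv w (v i)) (fun i _ => mulr_ge0 (LS i) (wge i)) H i isT).
have lamS0 : forall i, ~~ T i -> lamS i = 0.
  move=> i; rewrite HT => /eqP nd; have := term0 i => /eqP; rewrite mulf_eq0.
  by case/orP => /eqP.
have posT : forall i, T i -> 0 < lamS i.
  move=> i; rewrite HT => /eqP d0; apply: posS.
  case: (pselect (exists l, rep v x l /\ 0 < l i)) => // nS.
  by have := wpos i nS; rewrite d0 ltxx.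
have xT : x = \sum_(i | T i) lamS i *: v i.
  rewrite ES [RHS]big_mkcond; apply: eq_bigr => i _ /=.
  by case: (boolP (T i)) => Ti //; rewrite lamS0 // scale0r.
pose K := (\sum_i \sum_j absz (a i ord0 j))%N.
have [B [B0 HB]] := box_bound Hsub [seq box_vec f | f <- enum {ffun 'I_m -> 'I_(K.*2.+1)}].
pose X := \sum_(i | T i) (1 + B) / lamS i.
have X0 : 0 <= X.
  apply: sumr_ge0 => i Ti; apply: divr_ge0; first lra.
  exact: ltW (posT i Ti).
pose e := Num.bound X.
pose N := (p ^ e)%N.
have XN : X < N%:R.
  apply: lt_le_trans (archi_boundP X0) _; rewrite ler_nat; apply: ltnW; apply: ltn_expl.
  exact: prime_gt1.
have N0 : (0 : R) < N%:R by rewrite ltr0n expn_gt0 prime_gt0.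
have NL : forall i, T i -> 1 + B < N%:R * lamS i.
  move=> i Ti; rewrite -ltr_pdivrMr ?posT //.
  apply: le_lt_trans XN.
  rewrite /X (bigD1 i) //= lerDl sumr_ge0 // => k /andP [Tk _].
  apply: divr_ge0; first lra.
  exact: ltW (posT k Tk).
pose fl := fun i => Num.floor (N%:R * lamS i).
pose r := (N%:Z) *: b - \sum_(i | T i) fl i *: a i.
have Hr : rvec R r = \sum_(i | T i) (N%:R * lamS i - (fl i)%:~R) *: v i.
  rewrite rvecB rvecZ rvec_sum -/x xT scaler_sumr -sumrB; apply: eq_bigr => i _.
  by rewrite rvecZ scalerA scalerBl.
have rL : r \in [seq box_vec f | f <- enum {ffun 'I_m -> 'I_(K.*2.+1)}].
  apply: box_mem; apply: (coord_bound _ Hr) => i Ti.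
  have h1 := lt_succ_floor (N%:R * lamS i); have h2 := floor_le_tmp (N%:R * lamS i).
  rewrite intrD in h1; rewrite /fl; apply/andP; split; lra.
have [mu [Hmu Hmr]] := HB r rL (ex_intro _ _ Hr).
exists (fun i => if T i then ((fl i)%:~R + mu i) / N%:R else 0); split.
  move=> i _; case: ifP => Ti; last by split; [exact: lexx | exact: padic0].
  split.
    apply: divr_ge0; last exact: ltW N0.
    have h1 := lt_succ_floor (N%:R * lamS i); rewrite intrD in h1.
    have h2 := (Hmu i Ti).2; rewrite ler_norml in h2; case/andP: h2 => h2 h2'.
    have h3 := NL i Ti.
    rewrite /fl; lra.
  by apply: padic_shift => //; exact: (Hmu i Ti).1.
have E : \sum_(i | T i) ((fl i)%:~R + mu i) *: v i = N%:R *: x.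
  rewrite (eq_bigr (fun i => (fl i)%:~R *: v i + mu i *: v i)); last first.
    by move=> i _; rewrite scalerDl.
  rewrite big_split /= -Hmr rvecB rvecZ rvec_sum.
  have -> : \sum_(i | T i) rvec R (fl i *: a i) = \sum_(i | T i) (fl i)%:~R *: v i.
    by apply: eq_bigr => i _; rewrite rvecZ.
  by rewrite addrC subrK.
transitivity (N%:R^-1 *: \sum_(i | T i) ((fl i)%:~R + mu i) *: v i).
  by rewrite E scalerA mulVf ?scale1r // lt0r_neq0.
rewrite scaler_sumr [RHS]big_mkcond [LHS]big_mkcond; apply: eq_bigr => i _ /=.
by case: ifP => _; [rewrite scalerA mulrC | rewrite scale0r].
Qed.

Theorem theorem1p2 (R : realType) (m n p : nat) (a : 'I_n -> 'rV[int]_m) :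
  prime p ->
  (padic_gen_cone R p a predT <->
   (forall F : 'rV[R]_m -> Prop, is_face a F -> (exists x, F x) ->
      padic_gen_subspace R p a
        (fun i => `[< F (rvec R (a i)) >]))).
Proof.
move=> pp; split.
  by move=> Hc F HF _; exact: forward.
exact: backward.
Qed.
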